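(* Let $n\ge3$, let the sites of an $n$-qubit chain be partitioned as $L=\{1,\dots,a\}$, $C=\{a+1\}$, $R=\{a+2,\dots,n\}$ with $L,R$ nonempty, and let $W\in\mathrm{Sp}(2n,\mathbb{Z}_2)$ be the symplectic matrix of a Clifford unitary that is an irreducible $1$-wall around $C$. Then $G_{\mathrm{left}}=G_{\mathrm{right}}$, and this subspace has dimension $1$; i.e. it corresponds to the group $\{\mathbb{1},\sigma\}$ generated by a single traceless single-qubit Pauli matrix $\sigma$ on site $a+1$.
   Context: Pauli operators modulo phases are identified with $\mathbb{Z}_2^{2n}$ via $(p_1,q_1,\dots,p_n,q_n)\mapsto X^{p_1}Z^{q_1}\otimes\cdots\otimes X^{p_n}Z^{q_n}$; symplectic form $J=\bigoplus_{i=1}^n\begin{pmatrix}0&1\\1&0\end{pmatrix}$; $\mathrm{Sp}(2n,\mathbb{Z}_2)=\{S:SJS^T=J\}$. $V_S$ denotes vectors supported on the site set $S$, $\mathbb{Z}_2^{2n}=V_L\oplus V_C\oplus V_R$, vectors $(l,c,r)$, $\pi_C$ the projection onto $V_C$. Left wall condition around $C$: for all $t\ge1$, $l\in V_L$: $W^t(l,0,0)\in V_L\oplus V_C\oplus\{0\}$. $W$ is an irreducible $1$-wall around $C$ if it satisfies the left wall condition around $C$ and contains no smaller wall, i.e. neither $W^t V_L\subseteq V_L$ for all $t\ge1$ nor $W^t(V_L\oplus V_C)\subseteq V_L\oplus V_C$ for all $t\ge1$. Internal subspaces: $G_{\mathrm{left}}=\pi_C(\mathrm{span}\{W^t(l,0,0):t\ge0,l\in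 V_L\})$, $G_{\mathrm{right}}=\pi_C(\mathrm{span}\{W^t(0,0,r):t\ge0,r\in V_R\})$. *)

(* Defs.v *)
From HB Require Import structures.
From mathcomp Require Import all_boot all_order all_algebra.
From mathcomp Require Import boolp.
Set Implicit Arguments. Unset Strict Implicit. Unset Printing Implicit Defensive.
Import GRing.Theory.
Local Open Scope ring_scope.

(* Pauli vectors mod phases: column vectors in F_2^{2n}; coordinate k (0-based)
   belongs to site (k %/ 2) (0-based), i.e. site k %/ 2 + 1 in 1-based numbering;
   coordinate 2s is p_{s+1}, coordinate 2s+1 is q_{s+1}. *)
Notation pvec n := 'cV['F_2]_(2 * n).
Notation pmat n := 'M['F_2]_(2 * n).

Definition site {n} (k : 'I_(2 * n)) : nat := k %/ 2.

Definition Jform (n : nat) : pmat n :=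
  \matrix_(i, j) ((site i == site j) && (i != j))%:R.

Definition symplectic n (S : pmat n) : Prop := S *m Jform n *m S^T = Jform n.

(* Partition (1-based sites): L = {1..a}, C = {a+1}, R = {a+2..n}.
   In 0-based site numbering: L = sites < a, C = site a, R = sites > a. *)
Definition inL {n} (a : nat) (k : 'I_(2 * n)) : bool := (site k < a)%N.
Definition inC {n} (a : nat) (k : 'I_(2 * n)) : bool := (site k == a)%N.
Definition inR {n} (a : nat) (k : 'I_(2 * n)) : bool := (a < site k)%N.

Definition supported {n} (S : pred 'I_(2 * n)) (v : pvec n) : bool :=
  [forall k, ~~ S k ==> (v k 0 == 0)].

Definition V_L {n} a (v : pvec n) := supported (inL a) v.
Definition V_LC {n} a (v : pvec n) := supported (fun k => inL a k || inC a k) v.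
Definition V_R {n} a (v : pvec n) := supported (inR a) v.

Definition left_wall {n} (a : nat) (W : pmat n) : Prop :=
  forall t : nat, (1 <= t)%N -> forall l : pvec n, V_L a l -> V_LC a (W ^+ t *m l).

Definition irreducible_wall {n} (a : nat) (W : pmat n) : Prop :=
  [/\ left_wall a W,
      ~ (forall t : nat, (1 <= t)%N -> forall l : pvec n, V_L a l -> V_L a (W ^+ t *m l))
    & ~ (forall t : nat, (1 <= t)%N -> forall v : pvec n, V_LC a v -> V_LC a (W ^+ t *m v))].

Definition span_of {n} (P : pvec n -> Prop) : {vspace pvec n} :=
  <<enum [set v : pvec n | `[< P v >] ]>>%VS.

Definition projC_mx {n} (a : nat) : pmat n :=
  \matrix_(i, j) ((i == j) && inC a i)%:R.

Definition G_left {n} (a : nat) (W : pmat n) : {vspace pvec n} :=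
  (linfun (mulmx (projC_mx a)) @:
     span_of (fun v => exists (t : nat) (l : pvec n), V_L a l /\ v = W ^+ t *m l))%VS.

Definition G_right {n} (a : nat) (W : pmat n) : {vspace pvec n} :=
  (linfun (mulmx (projC_mx a)) @:
     span_of (fun v => exists (t : nat) (r : pvec n), V_R a r /\ v = W ^+ t *m r))%VS.

(* Main.v *)
Require Import Defs.
From HB Require Import structures.
From mathcomp Require Import all_boot all_order all_algebra.
From mathcomp Require Import boolp zify.
Import GRing.Theory.
Local Open Scope ring_scope.

Lemma partner_lt {n} (i : 'I_(2*n)) : (2 * (i %/ 2) + (1 - i %% 2) < 2 * n)%N.
Proof. case: i => [i Hi] /=. lia. Qed.

Definition partner {n} (i : 'I_(2*n)) : 'I_(2*n) := Ordinal (partner_lt i).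

Lemma JformE {n} (i j : 'I_(2*n)) : Jform n i j = (j == partner i)%:R.
Proof.
rewrite mxE /site; congr (_%:R); congr (nat_of_bool _).
case: i j => [i Hi] [j Hj]; rewrite -!val_eqE /=.
apply/idP/idP. move/andP=>[/eqP h1 /eqP h2]; apply/eqP; lia.
move/eqP=> h; apply/andP; split; apply/eqP; lia.
Qed.

Lemma partnerK {n} (i : 'I_(2*n)) : partner (partner i) = i.
Proof. apply: val_inj => /=. case: i => [i Hi] /=. lia. Qed.

Lemma site_partner {n} (i : 'I_(2*n)) : site (partner i) = site i.
Proof. rewrite /site /=. case: i => [i Hi] /=. lia. Qed.

Lemma partner_sym {n} (i j : 'I_(2*n)) : (j == partner i) = (i == partner j).
Proof. apply/eqP/eqP => ->; by rewrite partnerK. Qed.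

Lemma Jv {n} m (x : 'M['F_2]_(2*n, m)) i c : (Jform n *m x) i c = x (partner i) c.
Proof.
rewrite mxE (bigD1 (partner i)) //= JformE eqxx mul1r big1 ?addr0 // => j /negbTE Hj.
by rewrite JformE Hj mul0r.
Qed.

Lemma JJ {n} : Jform n *m Jform n = 1%:M.
Proof.
apply/matrixP => i j. rewrite Jv JformE partnerK !mxE eq_sym.
by case: (i == j).
Qed.

Definition bf {n} (u v : pvec n) : 'F_2 := (u^T *m Jform n *m v) 0 0.

Lemma bfE {n} (u v : pvec n) : bf u v = \sum_i u i 0 * v (partner i) 0.
Proof. rewrite /bf -mulmxA mxE; apply: eq_bigr => i _; by rewrite mxE Jv. Qed.

Lemma bf_sym {n} (u v : pvec n) : bf u v = bf v u.
Proof.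
rewrite !bfE (reindex_inj (inv_inj (@partnerK n))) /=.
apply: eq_bigr => i _; by rewrite partnerK mulrC.
Qed.

Lemma supportedP {n} (S : pred 'I_(2*n)) (v : pvec n) :
  reflect (forall k, ~~ S k -> v k 0 = 0) (supported S v).
Proof.
apply: (iffP forallP) => H k; first by move=> nk; exact/eqP/(implyP (H k)).
by apply/implyP=> nk; apply/eqP/H.
Qed.

Lemma projCE {n} a (u : pvec n) k :
  (projC_mx a *m u) k 0 = if inC a k then u k 0 else 0.
Proof.
rewrite mxE (bigD1 k) //= mxE eqxx /= big1 ?addr0.
  by case: (inC a k); rewrite ?mul1r ?mul0r.
move=> j Hj; rewrite mxE eq_sym (negbTE Hj) /=; by rewrite mul0r.
Qed.

Lemma projC_VC {n} a (u : pvec n) : supported (inC a) (projC_mx a *m u).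
Proof. apply/supportedP => k nk; by rewrite projCE (negbTE nk). Qed.

Lemma delta_supp {n} (S : pred 'I_(2*n)) k : S k -> supported S (delta_mx k (0 : 'I_1)).
Proof.
move=> Sk; apply/supportedP => i ni; rewrite mxE.
case: (eqVneq i k) => [e|ne]; first by rewrite e Sk in ni.
by [] || (rewrite (negbTE ne)).

Qed.

Lemma bf_delta {n} (x : pvec n) k : bf (delta_mx (partner k) 0) x = x k 0.
Proof.
rewrite bfE (bigD1 (partner k)) //= mxE !eqxx partnerK mul1r big1 ?addr0 //.
by move=> i /negbTE Hi; rewrite mxE Hi mul0r.
Qed.

Definition VCR {n} a (w : pvec n) := supported (fun k => inC a k || inR a k) w.

Lemma bf_proj {n} a (u w : pvec n) : V_LC a u -> VCR a w ->
  bf u w = bf (projC_mx a *m u) (projC_mx a *m w).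
Proof.
move=> /supportedP Hu /supportedP Hw; rewrite !bfE; apply: eq_bigr => i _.
rewrite !projCE.
have hC : inC a (partner i) = inC a i by rewrite /inC site_partner.
rewrite hC.
have [lt|gt|eq] := ltngtP (site i) a.
- have -> : inC a i = false by rewrite /inC; apply/eqP; lia.
  rewrite Hw ?mulr0 //. rewrite /inC /inR site_partner; apply/norP; split; apply/negP; lia.
- have -> : inC a i = false by rewrite /inC; apply/eqP; lia.
  rewrite Hu ?mul0r //. rewrite /inC /inL; apply/norP; split; apply/negP; lia.
- by have -> : inC a i = true by rewrite /inC; apply/eqP.
Qed.

Lemma bf_x0 {n} (x : pvec n) : bf x 0 = 0.
Proof. by rewrite /bf mulmx0 mxE. Qed.

Lemma bf_LC_R {n} a (u w : pvec n) : V_LC a u -> V_R a w -> bf u w = 0.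
Proof.
move=> Hu Hw; rewrite (@bf_proj n a u w Hu).
  have -> : projC_mx a *m w = 0.
    apply/matrixP => k j; rewrite ord1 projCE mxE.
    case hk: (inC a k) => //. move/supportedP: Hw; apply.
    by move: hk; rewrite /inC /inR => /eqP ->; rewrite ltnn.
  by rewrite bf_x0.
move/supportedP: Hw => Hw; apply/supportedP => k nk; apply: Hw.
by move: nk; rewrite negb_or => /andP[].
Qed.

Lemma mx11_0 (M : 'M['F_2]_1) : M 0 0 = 0 -> M = 0.
Proof. by move=> h; apply/matrixP => i j; rewrite !ord1 h mxE. Qed.

Lemma span_kill {n} (A : 'M['F_2]_(1, 2*n)) (X : seq (pvec n)) :
  (forall x, x \in X -> A *m x = 0) -> forall x, x \in <<X>>%VS -> A *m x = 0.
Proof.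
move=> H x Hx.
have : (<<X>> <= lker (linfun (mulmx A)))%VS.
  by apply/span_subvP => y Hy; rewrite memv_ker lfunE /= H.
by move/subvP/(_ x Hx); rewrite memv_ker lfunE => /eqP.
Qed.

Lemma F2cases (z : 'F_2) : z = 0 \/ z = 1.
Proof. case: z => [[|[|m]] Hm]. left; exact/val_inj. right; exact/val_inj. done. Qed.

Lemma F2_key (a0 a1 b0 b1 : 'F_2) :
  (a0 != 0) || (a1 != 0) -> (b0 != 0) || (b1 != 0) -> a0 * b1 + a1 * b0 = 0 ->
  a0 = b0 /\ a1 = b1.
Proof.
by case: (F2cases a0) => ->; case: (F2cases a1) => ->; case: (F2cases b0) => ->;
  case: (F2cases b1) => ->.
Qed.

Lemma mxpow_mul {n} (W : 'M['F_2]_(2*n)) s t (l : pvec n) :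
  W ^+ s *m (W ^+ t *m l) = W ^+ (s + t) *m l.
Proof. by rewrite exprD mulmxA. Qed.

Lemma WJW_of {n} (W : 'M['F_2]_(2*n)) : symplectic W ->
  W^T *m Jform n *m W = Jform n /\ (Jform n *m W^T *m Jform n) *m W = 1%:M.
Proof.
rewrite /symplectic => HS.
have h1 : W *m (Jform n *m W^T *m Jform n) = 1%:M by rewrite !mulmxA HS JJ.
have h2 := mulmx1C h1.
split => //.
have : Jform n *m ((Jform n *m W^T *m Jform n) *m W) = Jform n by rewrite h2 mulmx1.
by rewrite !mulmxA JJ mul1mx.
Qed.

Lemma period {n} (W : 'M['F_2]_(2*n)) : symplectic W ->
  exists2 p, (0 < p)%N & W ^+ p = 1.
Proof.
move=> /WJW_of [_ h2].
have inj : injective (@mulmx _ (2*n) (2*n) (2*n) W).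
  move=> x y Hxy; have := congr1 (mulmx (Jform n *m W^T *m Jform n)) Hxy.
  by rewrite !mulmxA h2 !mul1mx.
have it : forall k, iter k (@mulmx _ (2*n) (2*n) (2*n) W) 1%:M = W ^+ k.
  elim => [|k IH] /=; first by rewrite expr0.
  by rewrite IH exprS.
exists (order (@mulmx _ (2*n) (2*n) (2*n) W) 1%:M); first exact: order_gt0.
by rewrite -it iter_order.
Qed.

Lemma shift_exists {n} (W : 'M['F_2]_(2*n)) : symplectic W ->
  forall t, exists2 s, (1 <= s)%N & W ^+ (s + t) = 1.
Proof.
move=> /period [p p0 Hp] t.
exists (p * t.+1 - t)%N; first by nia.
have -> : (p * t.+1 - t + t = p * t.+1)%N by nia.
by rewrite exprM Hp expr1n.
Qed.

Lemma bf_W {n} (W : 'M['F_2]_(2*n)) : W^T *m Jform n *m W = Jform n ->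
  forall k (x y : pvec n), bf (W ^+ k *m x) (W ^+ k *m y) = bf x y.
Proof.
move=> HW k x y.
have hk : (W ^+ k)^T *m Jform n *m W ^+ k = Jform n.
  elim: k => [|k IH]; first by rewrite expr0 trmx1 mul1mx mulmx1.
  rewrite exprSr -mulmxE trmx_mul.
  by rewrite mulmxA -!(mulmxA W^T) IH mulmxA HW.
by rewrite /bf !trmx_mul mulmxA -!(mulmxA x^T) hk.
Qed.

Lemma bf_shift {n} (W : 'M['F_2]_(2*n)) : W^T *m Jform n *m W = Jform n ->
  forall s t (x y : pvec n), W ^+ (s + t) = 1 -> bf x (W ^+ t *m y) = bf (W ^+ s *m x) y.
Proof.
move=> HW s t x y Hst.
by rewrite -(bf_W _ HW s) mxpow_mul Hst mul1mx.
Qed.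

Lemma VC_eq {n} a (Ha : (a + 2 <= n)%N) (x y : pvec n) :
  supported (inC a) x -> supported (inC a) y -> x != 0 -> y != 0 -> bf x y = 0 -> x = y.
Proof.
move=> Hx Hy nx ny H.
have c0lt : (2*a < 2*n)%N by lia.
have c1lt : (2*a+1 < 2*n)%N by lia.
pose c0 := Ordinal c0lt; pose c1 := Ordinal c1lt.
have p0 : partner c0 = c1 by apply: val_inj => /=; lia.
have p1 : partner c1 = c0 by apply: val_inj => /=; lia.
have inCc : forall k : 'I_(2*n), inC a k -> k = c0 \/ k = c1.
  move=> [k Hk]; rewrite /inC /site /= => /eqP h.
  have : (k = 2*a \/ k = 2*a+1)%N by lia.
  by case=> e; [left|right]; apply: val_inj => /=; lia.
have c0c1 : c1 != c0 by apply/eqP => /(congr1 val) /=; lia.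
have bfxy : bf x y = x c0 0 * y c1 0 + x c1 0 * y c0 0.
  rewrite bfE (bigD1 c0) //= (bigD1 c1) /=; last by rewrite c0c1.
  rewrite big1 ?addr0 ?p0 ?p1 //.
  move=> i /andP [i0 i1].
  have ni : ~~ inC a i.
    by apply/negP => /inCc [] e; [rewrite e eqxx in i0 | rewrite e eqxx in i1].
  by move/supportedP: Hx => ->; rewrite ?mul0r.
have nz : forall v : pvec n, supported (inC a) v -> v != 0 -> (v c0 0 != 0) || (v c1 0 != 0).
  move=> v Hv; apply: contraNT; rewrite negb_or !negbK => /andP[/eqP h0 /eqP h1].
  apply/eqP/matrixP => k j; rewrite ord1 mxE.
  case hk: (inC a k); first by case: (inCc k hk) => ->.
  by move/supportedP: Hv; apply; rewrite hk.
have [e0 e1] := @F2_key _ _ _ _ (nz x Hx nx) (nz y Hy ny) (etrans (esym bfxy) H).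
apply/matrixP => k j; rewrite ord1; case hk: (inC a k).
  by case: (inCc k hk) => ->.
move/supportedP: Hx => ->; last by rewrite hk.
by move/supportedP: Hy => ->; last by rewrite hk.
Qed.

Theorem lemma6 (n a : nat) (W : 'M['F_2]_(2 * n)) :
  (3 <= n)%N -> (1 <= a)%N -> (a + 2 <= n)%N ->
  symplectic W ->
  irreducible_wall a W ->
  G_left a W = G_right a W /\ \dim (G_left a W) = 1%N.
Proof.
move=> n3 a1 an HS [wall irr2 irr3].
have [HW _] := WJW_of _ HS.
have LC_stays : forall s l, V_L a l -> V_LC a (W ^+ s *m l).
  case=> [|s] l Hl; last exact: wall.
  rewrite expr0 mul1mx; move/supportedP: Hl => Hl; apply/supportedP => k.
  by rewrite negb_or => /andP[nk _]; exact: Hl.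
have R_stays : forall t r, V_R a r -> VCR a (W ^+ t *m r).
  move=> t r Hr; apply/supportedP => k; rewrite negb_or => /andP[nC nR].
  have [s s1 Hs] := shift_exists _ HS t.
  rewrite -bf_delta (bf_shift _ HW _ _ _ _ Hs); apply: bf_LC_R Hr; apply: wall => //.
  apply: delta_supp; rewrite /inL site_partner; move: nC nR; rewrite /inC /inR; lia.
have orth_gen : forall s t l r, V_L a l -> V_R a r ->
    bf (projC_mx a *m (W ^+ s *m l)) (projC_mx a *m (W ^+ t *m r)) = 0.
  move=> s t l r Hl Hr.
  rewrite -(@bf_proj n a _ _ (LC_stays s l Hl) (R_stays t r Hr)).
  have [k k1 Hk] := shift_exists _ HS t.
  rewrite (bf_shift _ HW _ _ _ _ Hk) mxpow_mul; apply: bf_LC_R Hr; apply: wall => //; lia.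
have GL_mem : forall x, x \in G_left a W -> exists2 u,
    u \in span_of (fun v => exists (t : nat) (l : pvec n), V_L a l /\ v = W ^+ t *m l)
    & x = projC_mx a *m u.
  by move=> x /memv_imgP [u Hu ->]; exists u => //; rewrite lfunE.
have GR_mem : forall x, x \in G_right a W -> exists2 u,
    u \in span_of (fun v => exists (t : nat) (r : pvec n), V_R a r /\ v = W ^+ t *m r)
    & x = projC_mx a *m u.
  by move=> x /memv_imgP [u Hu ->]; exists u => //; rewrite lfunE.
have orth : forall x y, x \in G_left a W -> y \in G_right a W -> bf x y = 0.
  move=> x y /GL_mem [u Hu ->] /GR_mem [w Hw ->].
  have step1 : forall u0, u0 \in enum [set v : pvec n | `[< exists (t : nat) (l : pvec n), V_L a l /\ v = W ^+ t *m l >] ] ->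
      bf (projC_mx a *m u0) (projC_mx a *m w) = 0.
    move=> u0; rewrite mem_enum inE => /asboolP [s [l [Hl ->]]].
    have : ((projC_mx a *m (W ^+ s *m l))^T *m Jform n *m projC_mx a) *m w = 0.
      apply: (span_kill _ _ _ _ Hw) => w0; rewrite mem_enum inE => /asboolP [t [r [Hr ->]]].
      apply: mx11_0; rewrite -mulmxA; exact: (orth_gen s t l r Hl Hr).
    by move=> h; rewrite /bf mulmxA h mxE.
  rewrite bf_sym.
  have : ((projC_mx a *m w)^T *m Jform n *m projC_mx a) *m u = 0.
    apply: (span_kill _ _ _ _ Hu) => u0 Hu0; apply: mx11_0; rewrite -mulmxA.
    change (bf (projC_mx a *m w) (projC_mx a *m u0) = 0); rewrite bf_sym; exact: step1.
  by move=> h; rewrite /bf mulmxA h mxE.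
have [x0 Hx0 nx0] : exists2 x, x \in G_left a W & x != 0.
  apply: contrapT => H; apply: irr2 => t t1 l Hl.
  have HLC := wall t t1 l Hl.
  case: (eqVneq (projC_mx a *m (W ^+ t *m l)) 0) => [h|h]; last first.
    exfalso; apply: H; exists (projC_mx a *m (W ^+ t *m l)) => //.
    have Hv : W ^+ t *m l \in span_of (fun v => exists (t : nat) (l : pvec n), V_L a l /\ v = W ^+ t *m l).
      by apply: memv_span; rewrite mem_enum inE; apply/asboolP; exists t, l.
    have := memv_img (linfun (mulmx (projC_mx a))) Hv; rewrite lfunE; exact.
  apply/supportedP => k nk; case hk: (inC a k).
    have := congr1 (fun M : pvec n => M k 0) h; rewrite /= projCE hk => ->; by rewrite mxE.
  by move/supportedP: HLC; apply; rewrite hk (negbTE nk).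
have [y0 Hy0 ny0] : exists2 y, y \in G_right a W & y != 0.
  apply: contrapT => H; apply: irr3 => t t1 v Hv.
  apply/supportedP => k nk.
  have [s _ Hs] := shift_exists _ HS t.
  rewrite -bf_delta (bf_shift _ HW _ _ _ _ Hs).
  have Hr : V_R a (delta_mx (partner k) 0).
    apply: delta_supp; rewrite /inR site_partner; move: nk; rewrite /inL /inC negb_or; move=> /andP[]; lia.
  have Hw := R_stays s _ Hr.
  have [h|h] := eqVneq (projC_mx a *m (W ^+ s *m delta_mx (partner k) (0 : 'I_1))) 0.
    rewrite bf_sym; apply: bf_LC_R Hv _.
    apply/supportedP => j nj; case hj: (inC a j).
      have := congr1 (fun M : pvec n => M j 0) h; rewrite /= projCE hj => ->; by rewrite mxE.
    by move/supportedP: Hw; apply; rewrite hj (negbTE nj).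
  exfalso; apply: H; exists (projC_mx a *m (W ^+ s *m delta_mx (partner k) (0 : 'I_1))) => //.
  have Hv' : W ^+ s *m delta_mx (partner k) (0 : 'I_1) \in span_of (fun v => exists (t : nat) (r : pvec n), V_R a r /\ v = W ^+ t *m r).
    by apply: memv_span; rewrite mem_enum inE; apply/asboolP; exists s, (delta_mx (partner k) 0).
  have := memv_img (linfun (mulmx (projC_mx a))) Hv'; rewrite lfunE; exact.
have GLC : forall x, x \in G_left a W -> supported (inC a) x.
  by move=> x /GL_mem [u _ ->]; exact: projC_VC.
have GRC : forall x, x \in G_right a W -> supported (inC a) x.
  by move=> x /GR_mem [u _ ->]; exact: projC_VC.
have key : forall x y, x \in G_left a W -> y \in G_right a W -> x != 0 -> y != 0 -> x = y.
  move=> x y Hx Hy nx ny; apply: (@VC_eq n a an x y (GLC _ Hx) (GRC _ Hy) nx ny); exact: orth.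
have sub1 : (G_left a W <= <[y0]>)%VS.
  apply/subvP => x Hx; case: (eqVneq x 0) => [->|nx]; first exact: mem0v.
  by rewrite (key x y0) // memv_line.
have sub2 : (<[y0]> <= G_right a W)%VS by rewrite -memvE.
have sub3 : (G_right a W <= <[x0]>)%VS.
  apply/subvP => y Hy; case: (eqVneq y 0) => [->|ny]; first exact: mem0v.
  by rewrite -(key x0 y) // memv_line.
have sub4 : (<[x0]> <= G_left a W)%VS by rewrite -memvE.
have eqLR : G_left a W = G_right a W.
  by apply: subv_anti; rewrite (subv_trans sub1 sub2) (subv_trans sub3 sub4).
split => //.
have -> : G_left a W = <[y0]>%VS.
  apply: subv_anti; rewrite sub1 /=.
  by rewrite (subv_trans sub2 (subv_trans sub3 sub4)).
by rewrite dim_vline ny0.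
Qed.
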